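(* Let $H$ be a connected, locally finite graph. Then $\beta(P_{2\infty}\,\Box\, H)=2$ if and only if $H$ is the trivial graph $K_1$.
   Context: $P_{2\infty}$ is the two-way infinite path, with vertex set $\mathbb Z$ and $i,j$ adjacent iff $|i-j|=1$. The cartesian product $G\Box H$ has vertex set $V(G)\times V(H)$, where $(a,v)$ is adjacent to $(b,w)$ iff either $a=b$ and $vw\in E(H)$, or $v=w$ and $ab\in E(G)$. $d$ denotes shortest-path distance. A vertex $x$ resolves $u,v$ if $d(u,x)\ne d(v,x)$; a set of vertices is a resolving set if every pair of distinct vertices is resolved by some vertex of it. The metric dimension $\beta$ is the minimum cardinality of a resolving set if a finite one exists, and $\infty$ otherwise. *)

(* Defs.v *)
From Stdlib Require Import ZArith List.
Open Scope Z_scope.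

Section Graphs.
Context {V : Type} (adj : V -> V -> Prop).

Definition simple_graph : Prop :=
  (forall u v, adj u v -> adj v u) /\ (forall u, ~ adj u u).

Inductive walk : V -> V -> nat -> Prop :=
| walk0 : forall x, walk x x 0
| walkS : forall x y z n, adj x y -> walk y z n -> walk x z (S n).

Definition connected : Prop :=
  inhabited V /\ forall u v, exists n, walk u v n.

Definition locally_finite : Prop :=
  forall v, exists l : list V, forall w, adj v w -> In w l.

Definition dist_is (u v : V) (n : nat) : Prop :=
  walk u v n /\ forall m, walk u v m -> (n <= m)%nat.

Definition resolves (x u v : V) : Prop :=
  exists n m, dist_is u x n /\ dist_is v x m /\ n <> m.

Definition resolving_set (W : list V) : Prop :=
  forall u v, u <> v -> exists x, In x W /\ resolves x u v.

Definition metric_dim_eq (k : nat) : Prop :=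
  (exists W, NoDup W /\ length W = k /\ resolving_set W) /\
  (forall W, NoDup W -> resolving_set W -> (k <= length W)%nat).

End Graphs.

Definition P2inf_adj (i j : Z) : Prop := Z.abs (i - j) = 1.

Definition cart_adj {A B : Type} (adjG : A -> A -> Prop) (adjH : B -> B -> Prop)
  (p q : A * B) : Prop :=
  (fst p = fst q /\ adjH (snd p) (snd q)) \/ (snd p = snd q /\ adjG (fst p) (fst q)).

(* Main.v *)
Require Import Defs.
From Stdlib Require Import ZArith List Lia Classical.

Section Gen.
Context {V : Type} (adj : V -> V -> Prop).

Lemma walk_trans x y z a b : walk adj x y a -> walk adj y z b -> walk adj x z (a+b).
Proof. induction 1; intros; simpl; [assumption| econstructor; eauto]. Qed.

Lemma walk0_eq x y : walk adj x y 0 -> x = y.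
Proof. intro H; inversion H; auto. Qed.

Lemma dist_refl x : dist_is adj x x 0.
Proof. split; [constructor| intros; lia]. Qed.

Lemma dist_unique u v n m : dist_is adj u v n -> dist_is adj u v m -> n = m.
Proof. intros [A B] [C D]. specialize (B m C). specialize (D n A). lia. Qed.

Lemma dist_exists u v n : walk adj u v n -> exists k, dist_is adj u v k.
Proof.
  revert n. induction n as [n IH] using (well_founded_induction lt_wf). intros W.
  destruct (classic (exists m, (m < n)%nat /\ walk adj u v m)) as [[m [Hm Wm]]|Hn].
  - eauto.
  - exists n. split; auto. intros m Wm. destruct (Nat.lt_ge_cases m n); auto.
    exfalso; eauto.
Qed.

Lemma no_res x u v c : dist_is adj u x c -> dist_is adj v x c -> ~ resolves adj x u v.
Proof.
  intros A B [n [m [C [D E]]]]. apply E.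
  rewrite <- (dist_unique _ _ _ _ A C), <- (dist_unique _ _ _ _ B D). auto.
Qed.
End Gen.

Section Prod.
Context {V : Type} (adjH : V -> V -> Prop).
Notation C := (cart_adj P2inf_adj adjH).

Lemma walk_line k : forall i (h : V), walk C (i,h) (i + Z.of_nat k, h) k.
Proof.
  induction k; intros.
  - replace (i + Z.of_nat 0)%Z with i by lia. constructor.
  - apply walkS with (y := ((i+1)%Z, h)).
    + right. simpl. split; auto. unfold P2inf_adj. lia.
    + replace (i + Z.of_nat (S k))%Z with (i + 1 + Z.of_nat k)%Z by lia. auto.
Qed.

Lemma walk_line_neg k : forall i (h : V), walk C (i,h) (i - Z.of_nat k, h) k.
Proof.
  induction k; intros.
  - replace (i - Z.of_nat 0)%Z with i by lia. constructor.
  - apply walkS with (y := ((i-1)%Z, h)).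
    + right. simpl. split; auto. unfold P2inf_adj. lia.
    + replace (i - Z.of_nat (S k))%Z with (i - 1 - Z.of_nat k)%Z by lia. auto.
Qed.

Lemma walk_line2 i j (h : V) : walk C (i,h) (j,h) (Z.abs_nat (i - j)).
Proof.
  destruct (Z.le_gt_cases i j).
  - pose proof (walk_line (Z.abs_nat (i-j)) i h) as W.
    replace (i + Z.of_nat (Z.abs_nat (i - j)))%Z with j in W by lia. exact W.
  - pose proof (walk_line_neg (Z.abs_nat (i-j)) i h) as W.
    replace (i - Z.of_nat (Z.abs_nat (i - j)))%Z with j in W by lia. exact W.
Qed.

Lemma walk_lift i (h g : V) m : walk adjH h g m -> walk C (i,h) (i,g) m.
Proof.
  induction 1. constructor. apply walkS with (y := (i,y)); auto. left; simpl; auto.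
Qed.

Lemma walk_proj p q n : walk C p q n ->
  exists m, walk adjH (snd p) (snd q) m /\ (Z.abs_nat (fst p - fst q) + m <= n)%nat.
Proof.
  induction 1.
  - exists 0%nat. split. constructor. lia.
  - destruct IHwalk as [m [W L]]. destruct H as [[E A]|[E A]].
    + exists (S m). split. econstructor; eauto. rewrite E. lia.
    + exists m. rewrite E. split; auto. unfold P2inf_adj in A. lia.
Qed.

Lemma dist_prod i j (h g : V) c : dist_is adjH h g c ->
  dist_is C (i,h) (j,g) (Z.abs_nat (i - j) + c).
Proof.
  intros [W M]. split.
  - eapply walk_trans. apply walk_line2. apply walk_lift; auto.
  - intros m Wm. destruct (walk_proj _ _ _ Wm) as [k [Wk L]]. simpl in *.
    specialize (M k Wk). lia.
Qed.
End Prod.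


Section Main.
Context {V : Type} (adjH : V -> V -> Prop) (Hsimple : simple_graph adjH)
  (Hconn : connected adjH).
Notation C := (cart_adj P2inf_adj adjH).

Lemma dist_adj h p : adjH h p -> dist_is adjH p h 1.
Proof.
  destruct Hsimple as [S I]. intros A. split.
  - apply walkS with (y := h); [apply S; auto| constructor].
  - intros m W. destruct m; [|lia]. apply walk0_eq in W. subst. exfalso; eapply I; eauto.
Qed.

Lemma has_nb (h u v : V) : u <> v -> exists p, adjH h p.
Proof.
  intros D. destruct Hconn as [_ Cn].
  destruct (classic (u = h)).
  - destruct (Cn h v) as [n W]. destruct W. congruence. eauto.
  - destruct (Cn h u) as [n W]. destruct W. congruence. eauto.
Qed.

Lemma dexists (h g : V) : exists c, dist_is adjH h g c.
Proof. destruct Hconn as [_ Cn]. destruct (Cn h g) as [n W]. eapply dist_exists; eauto. Qed.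

Lemma coll_lt a1 a2 (h1 h2 : V) : (a1 < a2)%Z -> h1 <> h2 ->
  exists u v, u <> v /\ ~ resolves C (a1,h1) u v /\ ~ resolves C (a2,h2) u v.
Proof.
  intros Lt Ne. destruct (dexists h1 h2) as [K [WK MK]].
  destruct K. { apply walk0_eq in WK. contradiction. }
  inversion WK; subst. rename y into p.
  assert (Dp : dist_is adjH p h2 K).
  { split; auto. intros m Wm. assert (walk adjH h1 h2 (S m)) by (econstructor; eauto).
    specialize (MK _ H). lia. }
  exists (a2, h1), ((a2 - 1)%Z, p). split; [intro E; inversion E; lia|]. split.
  - apply (no_res _ _ _ _ (Z.abs_nat (a2 - a1) + 0)).
    + apply dist_prod, dist_refl.
    + replace (Z.abs_nat (a2 - a1) + 0)%nat with (Z.abs_nat (a2 - 1 - a1) + 1)%nat by lia.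
      apply dist_prod, dist_adj; auto.
  - apply (no_res _ _ _ _ (Z.abs_nat (a2 - a2) + S K)).
    + apply dist_prod; split; auto.
    + replace (Z.abs_nat (a2 - a2) + S K)%nat with (Z.abs_nat (a2 - 1 - a2) + K)%nat by lia.
      apply dist_prod; auto.
Qed.

Lemma coll a1 a2 (h1 h2 u0 v0 : V) : u0 <> v0 ->
  exists u v, u <> v /\ ~ resolves C (a1,h1) u v /\ ~ resolves C (a2,h2) u v.
Proof.
  intros Nuv.
  destruct (Z.eq_dec a1 a2) as [E|Ne].
  - subst. exists ((a2+1)%Z, h1), ((a2-1)%Z, h1). split; [intro E; inversion E; lia|].
    destruct (dexists h1 h1) as [c1 D1]. destruct (dexists h1 h2) as [c2 D2].
    split.
    + apply (no_res _ _ _ _ (Z.abs_nat (a2 + 1 - a2) + c1)). apply dist_prod; auto.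
      replace (Z.abs_nat (a2 + 1 - a2) + c1)%nat with (Z.abs_nat (a2 - 1 - a2) + c1)%nat by lia.
      apply dist_prod; auto.
    + apply (no_res _ _ _ _ (Z.abs_nat (a2 + 1 - a2) + c2)). apply dist_prod; auto.
      replace (Z.abs_nat (a2 + 1 - a2) + c2)%nat with (Z.abs_nat (a2 - 1 - a2) + c2)%nat by lia.
      apply dist_prod; auto.
  - destruct (classic (h1 = h2)) as [Eh|Nh].
    + subst. destruct (has_nb h2 u0 v0 Nuv) as [p A].
      set (M := Z.max a1 a2).
      exists ((M+1)%Z, h2), (M, p). split; [intro E; inversion E; lia|].
      split.
      * apply (no_res _ _ _ _ (Z.abs_nat (M + 1 - a1) + 0)). apply dist_prod, dist_refl.
        replace (Z.abs_nat (M + 1 - a1) + 0)%nat with (Z.abs_nat (M - a1) + 1)%nat by lia.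
        apply dist_prod, dist_adj; auto.
      * apply (no_res _ _ _ _ (Z.abs_nat (M + 1 - a2) + 0)). apply dist_prod, dist_refl.
        replace (Z.abs_nat (M + 1 - a2) + 0)%nat with (Z.abs_nat (M - a2) + 1)%nat by lia.
        apply dist_prod, dist_adj; auto.
    + destruct (Z_lt_ge_dec a1 a2) as [L|L].
      * apply coll_lt; auto.
      * destruct (coll_lt a2 a1 h2 h1) as [u [v [A [B D]]]]; auto; [lia|]. exists u, v; auto.
Qed.
End Main.

Theorem lemma7 (V : Type) (adjH : V -> V -> Prop)
  (Hsimple : simple_graph adjH) (Hconn : connected adjH)
  (Hlf : locally_finite adjH) :
  metric_dim_eq (cart_adj P2inf_adj adjH) 2 <-> (forall u v : V, u = v).
Proof.
  split.
  - intros [[W [ND [Len R]]] _] u0 v0. apply NNPP; intro Nuv.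
    destruct W as [|w1 [|w2 [|]]]; simpl in Len; try discriminate.
    destruct w1 as [a1 h1], w2 as [a2 h2].
    destruct (coll adjH Hsimple Hconn a1 a2 h1 h2 u0 v0 Nuv) as [u [v [Ne [B1 B2]]]].
    destruct (R u v Ne) as [x [Hx Rx]]. simpl in Hx.
    destruct Hx as [<-|[<-|[]]]; contradiction.
  - intro All. destruct Hconn as [[h0] _]. split.
    + exists ((0%Z,h0) :: (1%Z,h0) :: nil). split; [|split; [reflexivity|]].
      * constructor; simpl. intros [E|[]]; inversion E. constructor; [auto|constructor].
      * intros [i g] [j g'] Ne. rewrite (All g h0), (All g' h0) in *.
        assert (i <> j) by (intro; subst; auto).
        destruct (Z.eq_dec (Z.abs i) (Z.abs j)).
        -- exists (1%Z,h0). split; simpl; auto.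
           exists (Z.abs_nat (i-1)+0)%nat, (Z.abs_nat (j-1)+0)%nat.
           split; [apply dist_prod, dist_refl| split; [apply dist_prod, dist_refl| lia]].
        -- exists (0%Z,h0). split; simpl; auto.
           exists (Z.abs_nat (i-0)+0)%nat, (Z.abs_nat (j-0)+0)%nat.
           split; [apply dist_prod, dist_refl| split; [apply dist_prod, dist_refl| lia]].
    + intros W ND R. destruct W as [|[a g] [|]]; simpl; try lia.
      * destruct (R (0%Z,h0) (1%Z,h0)) as [x [[] _]]. intro E; inversion E.
      * destruct (R ((a+1)%Z,g) ((a-1)%Z,g)) as [x [[<-|[]] Rx]].
        { intro E; inversion E; lia. }
        exfalso; refine (no_res _ _ _ _ (Z.abs_nat (a+1-a)+0)%nat _ _ Rx); [apply dist_prod, dist_refl|].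
        replace (Z.abs_nat (a+1-a)+0)%nat with (Z.abs_nat (a-1-a)+0)%nat by lia.
        apply dist_prod, dist_refl.
Qed.
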